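(* Let $K=\{x\in[0,1]^n: g_\ell(x)\ge 0,\ \ell=1,\dots,m\}$ with affine $g_\ell$, $V=[n]$, $t>1$, $y\in\mathrm{La}^t(K)$, $k<t$ a positive integer and $S\subseteq V$ such that $y_I=0$ for every $I\in\mathcal P_{2t}(V)$ with $|I\cap S|\ge k$. Let $y'$ be the extension of $y$ (so $y'_I=y_I$ if $|I|\le 2t$ and $y'_I=0$ otherwise), and for $X\subseteq S$ let $z^X_I=\sum_{J:\,X\subseteq J\subseteq S}(-1)^{|J\setminus X|}y'_{I\cup J}$ for all $I\subseteq V$. Let $\mathcal T_1=\{A\subseteq V: |A\setminus S|\le t-k\}$ and $\mathcal T_2=\{B\subseteq V:|B\setminus S|<t-k\}$. Then for every $X\subseteq S$: $M_{\mathcal T_1}(z^X)\succeq0$, and $M_{\mathcal T_2}(g_\ell*z^X)\succeq 0$ for every $\ell$.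
   Context: Notation: $\mathcal P_t(U)$ is the set of subsets of $U$ of size at most $t$. For a collection $\mathcal T$ of subsets and a vector $y$ indexed by subsets, $M_{\mathcal T}(y)$ is the symmetric matrix indexed by $\mathcal T$ with $(I,J)$-entry $y_{I\cup J}$. For an affine $g(x)=b+\sum_{j}a_jx_j$, $(g*y)_I=b\,y_I+\sum_j a_j y_{I\cup\{j\}}$. The $t$-th Lasserre lifted polytope $\mathrm{La}^t(K)$ of $K=\{x\in[0,1]^n:g_\ell(x)\ge0,\ \ell=1,\dots,m\}$ is the set of $y\in[0,1]^{\mathcal P_{2t}(V)}$ with $y_\emptyset=1$, $M_{\mathcal P_t(V)}(y)\succeq0$, and $M_{\mathcal P_{t-1}(V)}(g_\ell*y)\succeq0$ for all $\ell$. *)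

(* Defs.v *)
From HB Require Import structures.
From mathcomp Require Import all_boot all_order all_algebra.
Set Implicit Arguments. Unset Strict Implicit. Unset Printing Implicit Defensive.
Import Order.TTheory GRing.Theory Num.Theory.
Local Open Scope ring_scope.

Section Lasserre.
Variables (R : realFieldType) (n : nat).
Notation sub := {set 'I_n}.

Definition Pt (t : nat) : {set sub} := [set I : sub | (#|I| <= t)%N].

Definition momM (y : sub -> R) (I J : sub) : R := y (I :|: J).

Definition psd_on (T : {set sub}) (M : sub -> sub -> R) : Prop :=
  forall x : sub -> R, 0 <= \sum_(I in T) \sum_(J in T) x I * M I J * x J.

(* affine g(x) = b + sum_j a_j x_j acting on y: (g*y)_I = b y_I + sum_j a_j y_{I u {j}} *)
Definition gstar (b : R) (a : 'I_n -> R) (y : sub -> R) (I : sub) : R :=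
  b * y I + \sum_(j < n) a j * y (j |: I).

(* La^t(K) for K = {x in [0,1]^n : g_l(x) >= 0}, g_l(x) = b l + sum_j a l j x_j *)
Definition inLa (m : nat) (b : 'I_m -> R) (a : 'I_m -> 'I_n -> R)
    (t : nat) (y : sub -> R) : Prop :=
  (forall I : sub, I \in Pt t.*2 -> 0 <= y I <= 1) /\
  y set0 = 1 /\
  psd_on (Pt t) (momM y) /\
  (forall l : 'I_m, psd_on (Pt t.-1) (momM (gstar (b l) (a l) y))).

Definition yext (t : nat) (y : sub -> R) (I : sub) : R :=
  if (#|I| <= t.*2)%N then y I else 0.

Definition zX (t : nat) (y : sub -> R) (S X : sub) (I : sub) : R :=
  \sum_(J : sub | (X \subset J) && (J \subset S))
     (-1) ^+ #|J :\: X| * yext t y (I :|: J).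

End Lasserre.

(* Main.v *)
Require Import Defs.
From HB Require Import structures.
From mathcomp Require Import all_boot all_order all_algebra.
From Stdlib Require Import Lia.
Import Order.TTheory GRing.Theory Num.Theory.
Local Open Scope ring_scope.
Set Implicit Arguments. Unset Strict Implicit. Unset Printing Implicit Defensive.

Lemma set_ffun_sum (R : realFieldType) n (F : {set 'I_n} -> R) :
  \sum_(A : {set 'I_n}) F A = \sum_(f : {ffun 'I_n -> bool}) F [set i | f i].
Proof.
rewrite (reindex (fun f : {ffun 'I_n -> bool} => [set i | f i])) //.
exists (fun A : {set 'I_n} => [ffun i => i \in A]) => [f _|A _].
  by apply/ffunP => i; rewrite ffunE inE.
by apply/setP => i; rewrite inE ffunE.
Qed.

Lemma prod_ind (R : realFieldType) n (P : 'I_n -> bool) :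
  \prod_i ((P i)%:R : R) = ([forall i, P i])%:R.
Proof.
case: (boolP [forall i, P i]) => [/forallP H|/forallPn [i Hi]].
  by rewrite big1 // => i _; rewrite H.
by rewrite (bigD1 i) //= (negPf Hi) mul0r.
Qed.

Lemma mult_idem (R : realFieldType) n (h : 'I_n -> bool -> R)
  (hid : forall i b, \sum_(b1 : bool) \sum_(b2 : bool)
      h i b1 * h i b2 * ((b1 || b2) == b)%:R = h i b) (J : {set 'I_n}) :
  \sum_(J1 : {set 'I_n}) \sum_(J2 : {set 'I_n})
     (\prod_i h i (i \in J1)) * (\prod_i h i (i \in J2)) * ((J1 :|: J2) == J)%:R
  = \prod_i h i (i \in J).
Proof.
transitivity (\prod_i \sum_(b1 : bool) \sum_(b2 : bool)
   h i b1 * h i b2 * ((b1 || b2) == (i \in J))%:R); last first.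
  by apply: eq_bigr => i _; rewrite hid.
rewrite bigA_distr_bigA set_ffun_sum; apply: eq_bigr => f1 _.
rewrite bigA_distr_bigA set_ffun_sum; apply: eq_bigr => f2 _.
rewrite !big_split /= prod_ind.
congr (_ * _ * _).
- by apply: eq_bigr => i _; rewrite inE.
- by apply: eq_bigr => i _; rewrite inE.
congr (_%:R); congr (nat_of_bool _).
apply/idP/idP => [/eqP <-|/forallP H]; first by apply/forallP => i; rewrite !inE.
by apply/eqP/setP => i; rewrite !inE; apply/eqP.
Qed.

Definition hq (R : realFieldType) n (S X : {set 'I_n}) (i : 'I_n) (b : bool) : R :=
  if b then (if i \in S then (if i \in X then 1 else -1) else 0)
  else (if i \in X then 0 else 1).

Lemma hq_id (R : realFieldType) n (S X : {set 'I_n}) i b :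
  \sum_(b1 : bool) \sum_(b2 : bool)
      hq R S X i b1 * hq R S X i b2 * ((b1 || b2) == b)%:R = hq R S X i b.
Proof.
rewrite /hq !big_bool /=.
case: b; case: (i \in S); case: (i \in X) => /=;
  rewrite ?(mul0r, mulr0, mulr1, mul1r, add0r, addr0, mulrNN, mulN1r, mulrN1, opprK) //.
by rewrite subrr add0r.
Qed.

Lemma hq_prod (R : realFieldType) n (S X J : {set 'I_n}) :
  (if (X \subset J) && (J \subset S) then (-1) ^+ #|J :\: X| else 0)
  = \prod_i hq R S X i (i \in J).
Proof.
case: ifP => [/andP [XJ JS]|].
  rewrite -prodr_const big_mkcond /=; apply: eq_bigr => i _.
  rewrite /hq !inE.
  case iJ: (i \in J); case iX: (i \in X) => //=.
    by rewrite (subsetP JS).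
  by rewrite (subsetP JS).
  by rewrite (subsetP XJ) in iJ.
move/negbT; rewrite negb_and => /orP [/subsetPn [i iX iJ]|/subsetPn [i iJ iS]].
  by rewrite (bigD1 i) //= /hq (negPf iJ) iX mul0r.
by rewrite (bigD1 i) //= /hq iJ (negPf iS) mul0r.
Qed.

Lemma hq_sub (R : realFieldType) n (S X J : {set 'I_n}) :
  \prod_i hq R S X i (i \in J) != 0 -> J \subset S.
Proof.
apply: contraR => /subsetPn [i iJ iS].
by rewrite (bigD1 i) //= /hq iJ (negPf iS) mul0r.
Qed.

Lemma pred1_sum (R : realFieldType) n (E : {set 'I_n}) (F : {set 'I_n} -> R) :
  \sum_I ((E == I))%:R * F I = F E.
Proof.
rewrite (bigD1 E) //= eqxx mul1r big1 ?addr0 // => I hI.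
by rewrite eq_sym (negPf hI) mul0r.
Qed.

Definition vv (R : realFieldType) n (T : {set {set 'I_n}}) (x c : {set 'I_n} -> R)
  (I : {set 'I_n}) : R :=
  \sum_(A in T) \sum_J ((A :|: J) == I)%:R * x A * c J.

Lemma collapse (R : realFieldType) n (T : {set {set 'I_n}}) (x c g : {set 'I_n} -> R) :
  \sum_I vv T x c I * g I = \sum_(A in T) \sum_J x A * c J * g (A :|: J).
Proof.
transitivity (\sum_I \sum_(A in T) \sum_J ((A :|: J) == I)%:R * (x A * c J * g I)).
  apply: eq_bigr => I _; rewrite /vv big_distrl; apply: eq_bigr => A _.
  rewrite big_distrl; apply: eq_bigr => J _; by rewrite !mulrA.
rewrite exchange_big; apply: eq_bigr => A _.
rewrite exchange_big; apply: eq_bigr => J _.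
by rewrite pred1_sum.
Qed.

Lemma quad_reindex (R : realFieldType) n (T : {set {set 'I_n}}) (x c Y : {set 'I_n} -> R) :
  \sum_(A in T) \sum_(B in T) x A * (\sum_J1 \sum_J2 c J1 * c J2 * Y ((A :|: B) :|: (J1 :|: J2))) * x B
  = \sum_I1 \sum_I2 vv T x c I1 * Y (I1 :|: I2) * vv T x c I2.
Proof.
symmetry.
transitivity (\sum_I1 vv T x c I1 * \sum_I2 vv T x c I2 * Y (I1 :|: I2)).
  apply: eq_bigr => I1 _; rewrite big_distrr; apply: eq_bigr => I2 _.
  by rewrite /= mulrA mulrAC.
rewrite collapse; apply: eq_bigr => A _.
under eq_bigr do rewrite collapse.
transitivity (\sum_J1 \sum_(B in T) \sum_J2 x A * c J1 * (x B * c J2 * Y ((A :|: J1) :|: (B :|: J2)))).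
  by apply: eq_bigr => J1 _; rewrite big_distrr; apply: eq_bigr => B _; rewrite big_distrr /=; apply: eq_bigr => J2 _ /=; rewrite !mulrA.
rewrite exchange_big; apply: eq_bigr => B _.
rewrite mulr_sumr mulr_suml; apply: eq_bigr => J1 _.
rewrite mulr_sumr mulr_suml; apply: eq_bigr => J2 _.
by rewrite setUACA !mulrA [RHS]mulrAC (mulrAC (x A * c J1)).
Qed.

Lemma main_gen (R : realFieldType) n (S : {set 'I_n}) (k r p : nat)
  (T : {set {set 'I_n}}) (hT : forall A, A \in T -> (#|A :\: S| <= r)%N)
  (hrp : (r + k.-1 <= p)%N) (c : {set 'I_n} -> R)
  (hc : forall J, c J != 0 -> J \subset S) (Y Y0 : {set 'I_n} -> R)
  (hY : forall I, (k <= #|I :&: S|)%N -> Y I = 0)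
  (hYY0 : forall I1 I2 : {set 'I_n}, (#|I1| <= p)%N -> (#|I2| <= p)%N -> Y (I1 :|: I2) = Y0 (I1 :|: I2))
  (hpsd : psd_on (Pt n p) (momM Y0)) :
  psd_on T (fun A B => \sum_J1 \sum_J2 c J1 * c J2 * Y ((A :|: B) :|: (J1 :|: J2))).
Proof.
move=> x; rewrite quad_reindex.
set v := vv T x c.
pose w (I : {set 'I_n}) := if (#|I :&: S| < k)%N then v I else 0.
have hw : forall I : {set 'I_n}, ~~ (#|I| <= p)%N -> w I = 0.
  move=> I hI; rewrite /w; case: ifP => // hIS.
  rewrite /v /vv; apply: big1 => A hA; apply: big1 => J _.
  have [hE|hne] := eqVneq (A :|: J) I; last by rewrite /= mulr0n !mul0r.
  have [->|hcJ] := eqVneq (c J) 0; first by rewrite mulr0.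
  exfalso; move/negP: hI; apply.
  have JS := hc J hcJ.
  have hIdS : I :\: S = A :\: S.
    by rewrite -hE setDUl (_ : J :\: S = set0) ?setU0 //; apply/eqP; rewrite setD_eq0.
  rewrite -(cardsID S I) hIdS.
  apply: leq_trans hrp; rewrite addnC leq_add //.
    by apply: hT.
  by rewrite -ltnS (ltn_predK hIS).
have -> : \sum_(I1 : {set 'I_n}) \sum_(I2 : {set 'I_n}) v I1 * Y (I1 :|: I2) * v I2 =
  \sum_(I1 : {set 'I_n}) \sum_(I2 : {set 'I_n}) w I1 * Y (I1 :|: I2) * w I2.
  apply: eq_bigr => I1 _; apply: eq_bigr => I2 _.
  rewrite /w; case: ifP => h1; case: ifP => h2 //; rewrite hY ?mulr0 ?mul0r //.
  - apply: leq_trans (subset_leq_card (setSI _ (subsetUr I1 I2))).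
    by rewrite leqNgt h2.
  - apply: leq_trans (subset_leq_card (setSI _ (subsetUl I1 I2))).
    by rewrite leqNgt h1.
  - apply: leq_trans (subset_leq_card (setSI _ (subsetUl I1 I2))).
    by rewrite leqNgt h1.
have -> : \sum_(I1 : {set 'I_n}) \sum_(I2 : {set 'I_n}) w I1 * Y (I1 :|: I2) * w I2 =
   \sum_(I1 in Pt n p) \sum_(I2 in Pt n p) w I1 * momM Y0 I1 I2 * w I2.
  rewrite [RHS]big_mkcond; apply: eq_bigr => I1 _ /=.
  case: ifP => h1; last first.
    have h1' : ~~ (#|I1| <= p)%N by rewrite /Pt inE in h1; rewrite h1.
    by apply: big1 => I2 _; rewrite (hw I1 h1') !mul0r.
  rewrite [RHS]big_mkcond; apply: eq_bigr => I2 _ /=.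
  case: ifP => h2; last first.
    have h2' : ~~ (#|I2| <= p)%N by rewrite /Pt inE in h2; rewrite h2.
    by rewrite (hw I2 h2') mulr0.
  rewrite /Pt !inE in h1 h2.
  by rewrite /momM hYY0.
exact: hpsd.
Qed.

Lemma ar1 t k : (0<k)%N -> (k<t)%N -> ((t-k) + k.-1 <= t)%N.
Proof. move=> /ssrnat.ltP h1 /ssrnat.ltP h2; apply/ssrnat.leP; rewrite -!minusE -!plusE; lia. Qed.
Lemma ar2 t k : (0<k)%N -> (k<t)%N -> ((t-k).-1 + k.-1 <= t.-1)%N.
Proof. move=> /ssrnat.ltP h1 /ssrnat.ltP h2; apply/ssrnat.leP; rewrite -!minusE -!plusE; lia. Qed.
Lemma ar3 t a b : (a <= t)%N -> (b <= t)%N -> (a + b <= t.*2)%N.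
Proof. by move=> h1 h2; rewrite -addnn leq_add. Qed.
Lemma ar4 t a b (c : bool) : (1 < t)%N -> (a <= t.-1)%N -> (b <= t.-1)%N -> (c + (a + b) <= t.*2)%N.
Proof.
move=> /ssrnat.ltP h0 /ssrnat.leP h1 /ssrnat.leP h2; apply/ssrnat.leP; rewrite -addnn -!plusE.
case: c => /=; lia.
Qed.

Lemma psd_ext (R : realFieldType) n (T : {set {set 'I_n}}) (M1 M2 : {set 'I_n} -> {set 'I_n} -> R) :
  (forall I J, M1 I J = M2 I J) -> psd_on T M2 -> psd_on T M1.
Proof.
move=> h hp x; have := hp x.
by under eq_bigr do under eq_bigr do rewrite -h.
Qed.

Lemma Z2 (R : realFieldType) n t (y : {set 'I_n} -> R) (S X I : {set 'I_n}) :
  zX t y S X I = \sum_(J1 : {set 'I_n}) \sum_(J2 : {set 'I_n}) (\prod_i hq R S X i (i \in J1)) * (\prod_i hq R S X i (i \in J2))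
     * yext t y (I :|: (J1 :|: J2)).
Proof.
rewrite /zX big_mkcond /=.
transitivity (\sum_(J : {set 'I_n}) (\prod_i hq R S X i (i \in J)) * yext t y (I :|: J)).
  apply: eq_bigr => J _; rewrite -hq_prod; case: ifP => _ //; by rewrite mul0r.
transitivity (\sum_(J : {set 'I_n}) (\sum_(J1 : {set 'I_n}) \sum_(J2 : {set 'I_n})
     (\prod_i hq R S X i (i \in J1)) * (\prod_i hq R S X i (i \in J2)) * ((J1 :|: J2) == J)%:R)
     * yext t y (I :|: J)).
  by apply: eq_bigr => J _; rewrite (mult_idem (hq_id R S X)).
transitivity (\sum_(J : {set 'I_n}) \sum_(J1 : {set 'I_n}) \sum_(J2 : {set 'I_n})
   ((J1 :|: J2) == J)%:R * ((\prod_i hq R S X i (i \in J1)) * (\prod_i hq R S X i (i \in J2)) * yext t y (I :|: J))).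
  apply: eq_bigr => J _; rewrite big_distrl; apply: eq_bigr => J1 _.
  rewrite /= big_distrl; apply: eq_bigr => J2 _ /=.
  by rewrite [in RHS]mulrA [in RHS](mulrC (_%:R)).
rewrite exchange_big; apply: eq_bigr => J1 _.
rewrite exchange_big; apply: eq_bigr => J2 _.
by rewrite pred1_sum.
Qed.

Theorem mainTheorem7 (R : realFieldType) (n m : nat)
    (b : 'I_m -> R) (a : 'I_m -> 'I_n -> R)
    (t : nat) (ht : (1 < t)%N) (y : {set 'I_n} -> R)
    (hy : inLa b a t y)
    (k : nat) (hk0 : (0 < k)%N) (hkt : (k < t)%N)
    (S : {set 'I_n})
    (hS : forall I : {set 'I_n}, I \in Pt n t.*2 -> (k <= #|I :&: S|)%N -> y I = 0) :
  forall X : {set 'I_n}, X \subset S ->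
    psd_on [set A : {set 'I_n} | (#|A :\: S| <= t - k)%N] (momM (zX t y S X)) /\
    (forall l : 'I_m,
       psd_on [set B : {set 'I_n} | (#|B :\: S| < t - k)%N]
              (momM (gstar (b l) (a l) (zX t y S X)))).
Proof.
move=> X _.
have yp0 : forall I, (k <= #|I :&: S|)%N -> yext t y I = 0.
  move=> I hI; rewrite /yext; case: ifP => // h.
  by apply: hS => //; rewrite /Pt inE.
pose q (J : {set 'I_n}) := \prod_i hq R S X i (i \in J).
have hc : forall J, q J != 0 -> J \subset S by move=> J; apply: hq_sub.
have [_ [_ [hpsd1 hpsd2]]] := hy.
split.
  apply: (psd_ext (M2 := fun A B => \sum_J1 \sum_J2 q J1 * q J2 * yext t y ((A :|: B) :|: (J1 :|: J2)))).
    by move=> A B; rewrite /momM Z2.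
  apply: (@main_gen R n S k (t - k) t _ _ _ q hc (yext t y) y) => //.
  - by move=> A; rewrite inE.
  - exact: ar1.
  - move=> I1 I2 h1 h2; rewrite /yext ifT //.
    exact: leq_trans (leq_card_setU I1 I2).1 (ar3 h1 h2).
move=> l.
apply: (psd_ext (M2 := fun A B => \sum_J1 \sum_J2 q J1 * q J2 *
     gstar (b l) (a l) (yext t y) ((A :|: B) :|: (J1 :|: J2)))).
  move=> A B; rewrite /momM /gstar Z2.
  rewrite (eq_bigr (fun j => a l j * \sum_J1 \sum_J2 q J1 * q J2 *
       yext t y ((j |: (A :|: B)) :|: (J1 :|: J2)))); last by move=> j _; rewrite Z2.
  rewrite [RHS](eq_bigr (fun J1 => \sum_J2 (b l * (q J1 * q J2 * yext t y ((A :|: B) :|: (J1 :|: J2)))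
      + \sum_(j < n) a l j * (q J1 * q J2 * yext t y ((j |: (A :|: B)) :|: (J1 :|: J2)))))); last first.
    move=> J1 _; apply: eq_bigr => J2 _.
    rewrite mulrDr mulrCA mulr_sumr; congr (_ + _); apply: eq_bigr => j _.
    by rewrite mulrCA setUA.
  under [RHS]eq_bigr do rewrite big_split /=.
  rewrite big_split /=; congr (_ + _).
    by rewrite mulr_sumr; apply: eq_bigr => J1 _; rewrite mulr_sumr.
  under [RHS]eq_bigr do rewrite exchange_big /=.
  rewrite exchange_big /=; apply: eq_bigr => j _.
  rewrite mulr_sumr; apply: eq_bigr => J1 _; by rewrite mulr_sumr.
apply: (@main_gen R n S k (t - k).-1 t.-1 _ _ _ q hc (gstar (b l) (a l) (yext t y))
   (gstar (b l) (a l) y)) => //.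
- by move=> B; rewrite inE => h; rewrite -ltnS (ltn_predK h).
- exact: ar2.
- move=> I hI; rewrite /gstar yp0 // mulr0 add0r big1 // => j _.
  rewrite yp0 ?mulr0 //; apply: leq_trans hI _.
  by apply: subset_leq_card; apply: setSI; apply: subsetUr.
- move=> I1 I2 h1 h2; rewrite /gstar /yext ifT; last first.
    apply: leq_trans (leq_card_setU I1 I2).1 _.
    apply: leq_trans (ar4 false ht h1 h2); done.
  congr (_ + _); apply: eq_bigr => j _; rewrite ifT //.
  rewrite cardsU1; apply: leq_trans (ar4 (j \notin I1 :|: I2) ht h1 h2).
  by rewrite leq_add2l (leq_card_setU I1 I2).1.
Qed.
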